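(* Let $R$ be a unital ring and $E$ a directed graph. If $(L_R(E))_0$ is left (respectively right) noetherian, then $E$ is finite and satisfies Condition (NE).
   Context: A directed graph $E=(E^0,E^1,s,r)$ has vertex set $E^0$, edge set $E^1$, source and range maps $s,r$; finite means $E^0,E^1$ finite. A path is a sequence of edges $f_1\cdots f_n$ with $s(f_{i+1})=r(f_i)$, of length $n$; a cycle is a path with $s(f_1)=r(f_n)$ and $s(f_i)\neq s(f_1)$ for $2\le i\le n$; it has an exit if some edge $f$ satisfies $s(f)=s(f_i)$ for some $i$ with $f\neq f_i$. Condition (NE): no cycle has an exit. $L_R(E)$ is the $R$-algebra generated by $v\in E^0$, $f,f^*$ ($f\in E^1$), with $R$ commuting with generators, subject to $v_iv_j=\delta_{i,j}v_i$; $s(f)f=fr(f)=f$, $r(f)f^*=f^*s(f)=f^*$; $f^*f'=\delta_{f,f'}r(f)$; and $\sum_{s(f)=v}ff^*=v$ whenever $s^{-1}(v)$ is nonempty and finite. With $\alpha^*=f_n^*\cdots f_1^*$, every element is a finite sum $\sum r_i\alpha_i\beta_i^*$ ($r_i\in R$, $\alpha_i,\beta_i$ paths, vertices as length-0 paths); $(L_R(E))_0$ is the subring of such sums with $\mathrm{len}(\alpha_i)=\mathrm{len}(\beta_i)$ for all $i$. *)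

(* Defs.v *)
From HB Require Import structures.
From mathcomp Require Import all_boot all_order all_algebra.
From Stdlib Require List.

Set Implicit Arguments.
Unset Strict Implicit.
Unset Printing Implicit Defensive.

Import GRing.Theory.
Local Open Scope ring_scope.

Section LPA.
Variables (E0 E1 : Type) (s r : E1 -> E0).

Definition fin_type (T : Type) : Prop := exists l : list T, forall x, List.In x l.

Definition finite_graph : Prop := fin_type E0 /\ fin_type E1.

(* A cycle of length n.+1 is given by c 0, ..., c n (values beyond n unused):
   s(c (i+1)) = r(c i), s(c 0) = r(c n), and s(c i) <> s(c 0) for 1 <= i <= n. *)
Definition is_cycle (n : nat) (c : nat -> E1) : Prop :=
  (forall i, (i < n)%N -> s (c i.+1) = r (c i)) /\
  s (c 0%N) = r (c n) /\
  (forall i, (1 <= i <= n)%N -> s (c i) <> s (c 0%N)).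

Definition cycle_has_exit (n : nat) (c : nat -> E1) : Prop :=
  exists (f : E1) (i : nat), (i <= n)%N /\ s f = s (c i) /\ f <> c i.

Definition condNE : Prop :=
  forall n c, is_cycle n c -> ~ cycle_has_exit n c.

(* (v, l) is a path starting at vertex v with edge list l
   (l = [::] : the vertex v as a path of length 0). *)
Fixpoint is_path (v : E0) (l : seq E1) : Prop :=
  match l with
  | [::] => True
  | f :: l' => s f = v /\ is_path (r f) l'
  end.

Variables (R : nzRingType) (B : pzRingType).

(* The Leavitt path relations, in a unital ring B, for the images
   vv v, ee f, es f (= f^* ) of the generators, together with a unital ring
   morphism iota : R -> B whose image commutes with the generators. *)
Definition LPA_relations (iota : R -> B) (vv : E0 -> B) (ee es : E1 -> B) : Prop :=
  (forall v w, v <> w -> vv v * vv w = 0) /\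
  (forall v, vv v * vv v = vv v) /\
  (forall f, vv (s f) * ee f = ee f /\ ee f * vv (r f) = ee f) /\
  (forall f, vv (r f) * es f = es f /\ es f * vv (s f) = es f) /\
  (forall f g, f <> g -> es f * ee g = 0) /\
  (forall f, es f * ee f = vv (r f)) /\
  (forall v (l : seq E1), l <> [::] -> List.NoDup l ->
      (forall f, List.In f l <-> s f = v) ->
      \sum_(f <- l) ee f * es f = vv v) /\
  (forall a, (forall v, iota a * vv v = vv v * iota a) /\
                 (forall f, iota a * ee f = ee f * iota a) /\
                 (forall f, iota a * es f = es f * iota a)).

(* alpha = (v, l) is sent to v f1 ... fn, and alpha^* to fn^* ... f1^* v. *)
Definition path_el (vv : E0 -> B) (ee : E1 -> B) (v : E0) (l : seq E1) : B :=
  vv v * \prod_(f <- l) ee f.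
Definition path_star_el (vv : E0 -> B) (es : E1 -> B) (v : E0) (l : seq E1) : B :=
  (\prod_(f <- rev l) es f) * vv v.

(* The degree-0 part: finite sums of  r_i alpha_i beta_i^*  with
   len alpha_i = len beta_i. *)
Definition in_deg0 (iota : R -> B) (vv : E0 -> B) (ee es : E1 -> B) (x : B) : Prop :=
  exists (n : nat) (c : 'I_n -> R) (v w : 'I_n -> E0) (a b : 'I_n -> seq E1),
    (forall i, is_path (v i) (a i) /\ is_path (w i) (b i) /\ size (a i) = size (b i)) /\
    x = \sum_(i < n) iota (c i) * path_el vv ee (v i) (a i) * path_star_el vv es (w i) (b i).

End LPA.

(* L_R(E) is then the (non-unital) subring of B
   spanned by the r alpha beta^*, and (L_R(E))_0 is [in_deg0]. *)
Definition LPA_universal (E0 E1 : Type) (s r : E1 -> E0) (R : nzRingType) (B : pzRingType)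
  (iota : {rmorphism R -> B}) (vv : E0 -> B) (ee es : E1 -> B) : Prop :=
  LPA_relations s r iota vv ee es /\
  forall (B' : pzRingType) (iota' : {rmorphism R -> B'}) (vv' : E0 -> B') (ee' es' : E1 -> B'),
    LPA_relations s r iota' vv' ee' es' ->
    exists phi : {rmorphism B -> B'},
      [/\ (forall a, phi (iota a) = iota' a),
          (forall v, phi (vv v) = vv' v),
          (forall f, phi (ee f) = ee' f),
          (forall f, phi (es f) = es' f) &
          (forall psi : {rmorphism B -> B'},
             (forall a, psi (iota a) = iota' a) ->
             (forall v, psi (vv v) = vv' v) ->
             (forall f, psi (ee f) = ee' f) ->
             (forall f, psi (es f) = es' f) ->
             forall x, psi x = phi x)].

Definition left_ideal_of (B : pzRingType) (S I : B -> Prop) : Prop :=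
  [/\ (forall x, I x -> S x), I 0, (forall x y, I x -> I y -> I (x - y)) &
      (forall a x, S a -> I x -> I (a * x))].
Definition right_ideal_of (B : pzRingType) (S I : B -> Prop) : Prop :=
  [/\ (forall x, I x -> S x), I 0, (forall x y, I x -> I y -> I (x - y)) &
      (forall a x, S a -> I x -> I (x * a))].

Definition left_noetherian (B : pzRingType) (S : B -> Prop) : Prop :=
  forall I : nat -> B -> Prop,
    (forall n, left_ideal_of S (I n)) ->
    (forall n x, I n x -> I n.+1 x) ->
    exists N, forall m, (N <= m)%N -> forall x, I m x <-> I N x.
Definition right_noetherian (B : pzRingType) (S : B -> Prop) : Prop :=
  forall I : nat -> B -> Prop,
    (forall n, right_ideal_of S (I n)) ->
    (forall n x, I n x -> I n.+1 x) ->
    exists N, forall m, (N <= m)%N -> forall x, I m x <-> I N x.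

(* Main.v *)
Require Import Defs.
From HB Require Import structures.
From mathcomp Require Import all_boot all_order all_algebra.
From mathcomp Require Import boolp.
From Stdlib Require List.
Set Implicit Arguments.
Unset Strict Implicit.
Unset Printing Implicit Defensive.
Import GRing.Theory.
Local Open Scope ring_scope.

Section Sums.
Variables (T : Type) (V : zmodType).
Lemma sum_zero (l : seq T) (F : T -> V) :
  (forall f, List.In f l -> F f = 0) -> \sum_(f <- l) F f = 0.
Proof.
elim: l => [|a l IH] H; first by rewrite big_nil.
rewrite big_cons H /=; last by left.
by rewrite add0r IH // => f Hf; apply: H; right.
Qed.

Lemma sum_one (l : seq T) (F : T -> V) g : List.NoDup l -> List.In g l ->
  (forall f, List.In f l -> f <> g -> F f = 0) -> \sum_(f <- l) F f = F g.
Proof.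
elim: l => [|a l IH] ND Hg H; first by [].
rewrite big_cons; inversion ND; subst.
case: Hg => [E|Hg].
  subst a; rewrite sum_zero ?addr0 // => f Hf; apply: H; first by right.
  by move=> E; subst f.
rewrite H /=; [|by left|by move=> E; subst a].
by rewrite add0r IH // => f Hf; apply: H; right.
Qed.
End Sums.

Section Mdl.
Variables (E0 E1 : Type) (s r : E1 -> E0) (R : nzRingType).
Definition X := (E0 * (nat -> option E1))%type.
Definition M := X -> R.
Record Op := MkOp { op :> M -> M ;
  opB : forall m1 m2 x, op (fun y => m1 y - m2 y) x = op m1 x - op m2 x }.

Lemma Op_ext (a b : Op) : (forall m x, a m x = b m x) -> a = b.
Proof.
case: a b => [a Ha] [b Hb] /= H.
have E : a = b by apply: funext => m; apply: funext => x; exact: H.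
subst b. by rewrite (Prop_irrelevance Ha Hb).
Qed.

Lemma opBf (a : Op) m1 m2 : a (fun y => m1 y - m2 y) = fun x => a m1 x - a m2 x.
Proof. apply: funext => x; exact: opB. Qed.

Lemma op0 (a : Op) x : a (fun _ => 0) x = 0.
Proof.
have E : (fun _ : X => (0:R)) = (fun y => (fun _ : X => (0:R)) y - (fun _ : X => (0:R)) y).
  by apply: funext => y; rewrite subr0.
by rewrite E opB subrr.
Qed.

Lemma opD (a : Op) m1 m2 x : a (fun y => m1 y + m2 y) x = a m1 x + a m2 x.
Proof.
have E : (fun y => m1 y + m2 y) = (fun y => m1 y - (fun z => (fun _ : X => (0:R)) z - m2 z) y).
  by apply: funext => y; rewrite sub0r opprK.
by rewrite E opB opB op0 sub0r opprK.
Qed.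

Lemma opN (a : Op) m x : a (fun y => - m y) x = - a m x.
Proof.
have E : (fun y => - m y) = (fun y => (fun _ : X => (0:R)) y - m y).
  by apply: funext => y; rewrite sub0r.
by rewrite E opB op0 sub0r.
Qed.

Definition Op0 : Op := @MkOp (fun m x => 0) (fun _ _ _ => esym (subr0 0)).
Lemma Opopp_subproof (a : Op) m1 m2 x : - a (fun y => m1 y - m2 y) x = - a m1 x - - a m2 x.
Proof. by rewrite opB opprB opprK addrC. Qed.
Definition Opopp (a : Op) : Op := @MkOp (fun m x => - a m x) (Opopp_subproof a).
Lemma Opadd_subproof (a b : Op) m1 m2 x :
  a (fun y => m1 y - m2 y) x + b (fun y => m1 y - m2 y) x = (a m1 x + b m1 x) - (a m2 x + b m2 x).
Proof. rewrite (opB a) (opB b). by rewrite opprD addrACA. Qed.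
Definition Opadd (a b : Op) : Op := @MkOp (fun m x => a m x + b m x) (Opadd_subproof a b).
Definition Op1 : Op := @MkOp (fun m => m) (fun _ _ _ => erefl).
Lemma Opmul_subproof (a b : Op) m1 m2 x :
  a (b (fun y => m1 y - m2 y)) x = a (b m1) x - a (b m2) x.
Proof. by rewrite opBf opB. Qed.
Definition Opmul (a b : Op) : Op := @MkOp (fun m => a (b m)) (Opmul_subproof a b).

HB.instance Definition _ := gen_eqMixin Op.
HB.instance Definition _ := gen_choiceMixin Op.

Lemma OpaddA : associative Opadd.
Proof. by move=> a b c; apply: Op_ext => m x /=; rewrite addrA. Qed.
Lemma OpaddC : commutative Opadd.
Proof. by move=> a b; apply: Op_ext => m x /=; rewrite addrC. Qed.
Lemma Opadd0 : left_id Op0 Opadd.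
Proof. by move=> a; apply: Op_ext => m x /=; rewrite add0r. Qed.
Lemma OpaddN : left_inverse Op0 Opopp Opadd.
Proof. by move=> a; apply: Op_ext => m x /=; rewrite addNr. Qed.
Lemma OpmulA : associative Opmul.
Proof. by move=> a b c; apply: Op_ext => m x. Qed.
Lemma Opmul1 : left_id Op1 Opmul.
Proof. by move=> a; apply: Op_ext => m x. Qed.
Lemma Opmulr1 : right_id Op1 Opmul.
Proof. by move=> a; apply: Op_ext => m x. Qed.
Lemma OpmulDl : left_distributive Opmul Opadd.
Proof. by move=> a b c; apply: Op_ext => m x. Qed.
Lemma OpmulDr : right_distributive Opmul Opadd.
Proof. by move=> a b c; apply: Op_ext => m x /=; rewrite opD. Qed.

HB.instance Definition _ := GRing.isPzRing.Build Op OpaddA OpaddC Opadd0 OpaddN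
  OpmulA Opmul1 Opmulr1 OpmulDl OpmulDr.

Lemma OpmulE (a b : Op) m x : (a * b) m x = a (b m) x. Proof. by []. Qed.
Lemma OpaddE (a b : Op) m x : (a + b) m x = a m x + b m x. Proof. by []. Qed.
Lemma Op0E m x : (0 : Op) m x = 0. Proof. by []. Qed.
Lemma Op1E m x : (1 : Op) m x = m x. Proof. by []. Qed.

Definition Tm (sg : X -> option X) : Op.
refine (@MkOp (fun m x => match sg x with Some y => m y | None => 0 end) _).
by move=> m1 m2 x; case: (sg x) => //; rewrite subr0.
Defined.

Lemma TmM sg tau : Tm sg * Tm tau = Tm (fun x => obind tau (sg x)).
Proof. by apply: Op_ext => m x; rewrite OpmulE /=; case: (sg x). Qed.

Lemma Tm_ext sg tau : sg =1 tau -> Tm sg = Tm tau.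
Proof. by move=> H; apply: Op_ext => m x /=; rewrite H. Qed.

Lemma Tm0 : Tm (fun _ => None) = 0.
Proof. by apply: Op_ext. Qed.

Definition regular (v : E0) := exists l : seq E1, l <> [::] /\ List.NoDup l /\
   (forall f, List.In f l <-> s f = v).

Fixpoint vpos (v : E0) (p : nat -> option E1) (n : nat) : E0 :=
  match n with 0 => v | n'.+1 => match p n' with Some f => r f | None => vpos v p n' end end.

Definition valid (x : X) := forall n, match x.2 n with
  Some f => s f = vpos x.1 x.2 n | None => ~ regular (vpos x.1 x.2 n) end.

Definition shift (p : nat -> option E1) := fun n => p n.+1.
Definition pcons f (p : nat -> option E1) :=
  fun n => match n with 0 => Some f | n'.+1 => p n' end.

Lemma vpos_shift v p f : p 0 = Some f -> forall n, vpos (r f) (shift p) n = vpos v p n.+1.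
Proof.
move=> H; elim=> [|n IH] /=; first by rewrite H.
by rewrite /shift; case: (p n.+1) => // g; rewrite IH.
Qed.

Lemma vpos_cons v p f : v = r f -> forall n, vpos (s f) (pcons f p) n.+1 = vpos v p n.
Proof.
move=> H; elim=> [|n IH] /=; first by rewrite H.
by case: (p n) => // g; rewrite -IH.
Qed.

Lemma valid_shift v p f : valid (v, p) -> p 0 = Some f -> valid (r f, shift p).
Proof.
move=> V H n; rewrite [_.1]/= [_.2]/= (vpos_shift v H n); exact: (V n.+1).
Qed.

Lemma valid_cons v p f : valid (v, p) -> v = r f -> valid (s f, pcons f p).
Proof.
move=> V H [|n]; first by [].
rewrite [_.1]/= [_.2]/= (vpos_cons p H n); exact: (V n).
Qed.

Definition sv v (x : X) := if pselect (x.1 = v /\ valid x) then Some x else None.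
Definition sstrip f (x : X) := if pselect (valid x /\ x.1 = s f /\ x.2 0 = Some f)
  then Some (r f, shift x.2) else None.
Definition sprep f (x : X) := if pselect (valid x /\ x.1 = r f)
  then Some (s f, pcons f x.2) else None.

Definition vvO v := Tm (sv v).
Definition eeO f := Tm (sstrip f).
Definition esO f := Tm (sprep f).
Definition iotaO (a : R) : Op.
refine (@MkOp (fun m x => a * m x) _).
by move=> m1 m2 x; rewrite mulrBr.
Defined.


Lemma R1 v w : v <> w -> vvO v * vvO w = 0.
Proof.
move=> N; rewrite /vvO TmM -Tm0; apply: Tm_ext => x; rewrite /sv.
case: pselect => [[A B]|A] //=; case: pselect => [[C D]|] //.
by case: N; rewrite -A -C.
Qed.

Lemma R2 v : vvO v * vvO v = vvO v.
Proof.
rewrite /vvO TmM; apply: Tm_ext => x; rewrite /sv.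
case: pselect => [[A B]|A] //=; case: pselect => // C; by case: C; split.
Qed.

Lemma R3a f : vvO (s f) * eeO f = eeO f.
Proof.
rewrite /vvO /eeO TmM; apply: Tm_ext => -[v p]; rewrite /sv /sstrip /=.
case: (pselect (v = s f /\ valid (v, p))) => [[A B]|A] //=.
case: pselect => [[B [C D]]|] // ; by case: A.
Qed.

Lemma R3b f : eeO f * vvO (r f) = eeO f.
Proof.
rewrite /vvO /eeO TmM; apply: Tm_ext => -[v p]; rewrite /sv /sstrip /=.
case: pselect => [[B [C D]]|] //= ; case: pselect => // N; case: N; split => //.
exact: valid_shift B D.
Qed.

Lemma R4a f : vvO (r f) * esO f = esO f.
Proof.
rewrite /vvO /esO TmM; apply: Tm_ext => -[v p]; rewrite /sv /sprep /=.
case: (pselect (v = r f /\ valid (v, p))) => [[A B]|A] //=.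
case: pselect => [[B C]|] // ; by case: A.
Qed.

Lemma R4b f : esO f * vvO (s f) = esO f.
Proof.
rewrite /vvO /esO TmM; apply: Tm_ext => -[v p]; rewrite /sv /sprep /=.
case: pselect => [[B C]|] //= ; case: pselect => // N; case: N; split => //.
exact: valid_cons B C.
Qed.

Lemma R5 f g : f <> g -> esO f * eeO g = 0.
Proof.
move=> N; rewrite /esO /eeO TmM -Tm0; apply: Tm_ext => -[v p]; rewrite /sprep /sstrip /=.
case: (pselect (valid (v, p) /\ v = r f)) => [[B C]|] //= ; case: pselect => [[B1 [C1 E]]|] //; exfalso; apply: N; congruence. Qed.

Lemma R6 f : esO f * eeO f = vvO (r f).
Proof.
rewrite /esO /eeO /vvO TmM; apply: Tm_ext => -[v p]; rewrite /sprep /sstrip /sv /=.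
case: pselect => [[B C]|A] /=.
  case: pselect => [Z1|N]; last by case: N; split => //; exact: valid_cons B C.
  by case: pselect => [Z2|N] /=; [rewrite C | case: N].
by case: pselect => // -[C B]; case: A.
Qed.

Lemma R8 a sg : iotaO a * Tm sg = Tm sg * iotaO a.
Proof. by apply: Op_ext => m x; rewrite !OpmulE /=; case: (sg x) => //; rewrite mulr0. Qed.


Lemma sum_opE (l : seq E1) (F : E1 -> Op) m x :
  (\sum_(f <- l) F f) m x = \sum_(f <- l) F f m x.
Proof.
elim: l => [|a l IH]; first by rewrite !big_nil.
by rewrite !big_cons OpaddE IH.
Qed.

Lemma EE f : eeO f * esO f =
  Tm (fun x => if pselect (valid x /\ x.1 = s f /\ x.2 0 = Some f) then Some x else None).
Proof.
rewrite /eeO /esO TmM; apply: Tm_ext => -[v p]; rewrite /sstrip /sprep /=.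
case: pselect => [[B [C D]]|A] /=.
  case: pselect => [Z|N] /=; last by case: N; split => //; exact: valid_shift B D.
  congr Some; rewrite C; congr pair; apply: funext => -[|n] //=.
by [].
Qed.


Lemma R7 v (l : seq E1) : l <> [::] -> List.NoDup l -> (forall f, List.In f l <-> s f = v) ->
  \sum_(f <- l) eeO f * esO f = vvO v.
Proof.
move=> Hne ND Hl; apply: Op_ext => m [w p]; rewrite sum_opE.
under eq_bigr do rewrite EE.
rewrite /vvO /= /sv /=.
case: pselect => [[A B]|A] /=.
  subst w.
  case E: (p 0) => [g|].
    have Hg : s g = v by have := B 0; rewrite /= E.
    have Ig : List.In g l by apply: (proj2 (Hl g)).
    rewrite (@sum_one _ _ l _ g ND Ig).
      by case: pselect => [Z|N] //=; case: N.
    move=> f Hf Nfg; case: pselect => [[B1 [C1 D1]]|N] //=.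
    by exfalso; apply: Nfg; simpl in D1; congruence.
  have := B 0; rewrite /= E => N; case: N; by exists l.
apply: sum_zero => f Hf; case: pselect => [[B1 [C1 D1]]|N] //=.
by case: A; split => //; rewrite C1; apply: (proj1 (Hl f)).
Qed.


Lemma iotaO_zmod : zmod_morphism iotaO.
Proof. by move=> a b; apply: Op_ext => m x /=; rewrite mulrBl. Qed.
Lemma iotaO_mon : monoid_morphism iotaO.
Proof.
split; first by apply: Op_ext => m x /=; rewrite mul1r.
by move=> a b; apply: Op_ext => m x /=; rewrite mulrA.
Qed.
HB.instance Definition _ := GRing.isZmodMorphism.Build R Op iotaO iotaO_zmod.
HB.instance Definition _ := GRing.isMonoidMorphism.Build R Op iotaO iotaO_mon.

Lemma model_rel : LPA_relations s r iotaO vvO eeO esO.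
Proof.
split; first exact: R1.
split; first exact: R2.
split; first by move=> f; split; [exact: R3a | exact: R3b].
split; first by move=> f; split; [exact: R4a | exact: R4b].
split; first exact: R5.
split; first exact: R6.
split; first by move=> v l Hne ND Hl; exact: R7.
by move=> a; split; [|split] => ?; apply: R8.
Qed.

Fixpoint endv (w : E0) (a : seq E1) : E0 :=
  match a with [::] => w | f :: a' => endv (r f) a' end.

Definition pa (a : seq E1) (q : nat -> option E1) := foldr pcons q a.

Lemma valid_pa w a q : is_path s r w a -> valid (endv w a, q) -> valid (w, pa a q).
Proof.
elim: a w => [|f a IH] w //= [Hs Hp] V.
rewrite -Hs; apply: valid_cons (IH _ Hp V) _; done.
Qed.

Lemma prodee_act w a q m : is_path s r w a -> valid (endv w a, q) ->
  (\prod_(f <- a) eeO f) m (w, pa a q) = m (endv w a, q).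
Proof.
elim: a w m => [|f a IH] w m /=; first by rewrite big_nil.
move=> [Hs Hp] V; rewrite big_cons OpmulE /= /sstrip /=.
case: pselect => [Z|N] /=; first exact: IH.
case: N; split; last by split.
by rewrite -Hs; apply: valid_cons (valid_pa Hp V) _.
Qed.

Lemma prodes_act w a q m : is_path s r w a -> valid (endv w a, q) ->
  (\prod_(f <- rev a) esO f) m (endv w a, q) = m (w, pa a q).
Proof.
elim: a w m => [|f a IH] w m /=; first by rewrite big_nil.
move=> [Hs Hp] V; rewrite rev_cons big_rcons OpmulE IH //= /sprep /=.
case: pselect => [Z|N] /=; first by rewrite Hs.
by case: N; split => //; apply: valid_pa Hp V.
Qed.

Definition gsel (z : E0) : option E1 :=
  match pselect (exists f, s f = z /\ regular z) with
  | left H => Some (proj1_sig (cid H)) | right _ => None end.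

Fixpoint walk (z : E0) (n : nat) : E0 :=
  match n with 0 => z | n'.+1 => match gsel (walk z n') with Some e => r e | None => walk z n' end end.

Lemma walk_valid z : valid (z, fun n => gsel (walk z n)).
Proof.
have Hv : forall n, vpos z (fun n => gsel (walk z n)) n = walk z n.
  by elim=> [|n IH] //=; rewrite IH.
move=> n /=; rewrite Hv /gsel.
case: pselect => [H|N] /=.
  by case: (cid H) => f [Hf Hr].
move=> [l [Hne [ND Hl]]]; case: N.
case: l Hne ND Hl => [//|f l] Hne ND Hl; exists f; split; first by apply/(Hl f); left.
by exists (f :: l).
Qed.

Lemma model_nz w a : is_path s r w a ->
  vvO w * (\prod_(f <- a) eeO f) * ((\prod_(f <- rev a) esO f) * vvO w) <> 0.
Proof.
move=> Hp E.
set q := fun n => gsel (walk (endv w a) n).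
have V : valid (endv w a, q) by apply: walk_valid.
have Vx : valid (w, pa a q) by apply: valid_pa.
have := congr1 (fun o : Op => o (fun _ => 1) (w, pa a q)) E.
rewrite (OpmulE (vvO w * _)) (OpmulE (vvO w)) {1}/vvO [in X in X -> _]/= /sv /=.
case: pselect => [Z|N] /=; last by case: N.
rewrite (prodee_act _ Hp V) (prodes_act _ Hp V) /=.
case: pselect => [Z2|N] /=; last by case: N.
by move/eqP; rewrite oner_eq0.
Qed.

End Mdl.






Section Lists.
Variables (E0 E1 : Type) (s r : E1 -> E0).

Fixpoint endp (w : E0) (a : seq E1) : E0 :=
  match a with [::] => w | f :: a' => endp (r f) a' end.

Lemma is_path_cat w a t : is_path s r w (a ++ t) <-> is_path s r w a /\ is_path s r (endp w a) t.
Proof.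
elim: a w => [|f a IH] w /=; first by split => // -[].
rewrite IH; tauto.
Qed.

Lemma endp_cat w a t : endp w (a ++ t) = endp (endp w a) t.
Proof. by elim: a w => [|f a IH] w //=. Qed.

Lemma trich (b a : seq E1) : (exists t, a = b ++ t) \/ (exists t, b = a ++ t) \/
  (exists p f g b1 a1, f <> g /\ b = p ++ f :: b1 /\ a = p ++ g :: a1).
Proof.
elim: b a => [|f b IH] a; first by left; exists a.
case: a => [|g a]; first by right; left; exists (f :: b).
case: (pselect (f = g)) => [E|N].
  subst g; case: (IH a) => [[t ->]|[[t ->]|[p [f1 [g1 [b1 [a1 [N [-> ->]]]]]]]]].
  - by left; exists t.
  - by right; left; exists t.
  - by right; right; exists (f :: p), f1, g1, b1, a1.
by right; right; exists [::], f, g, b, a.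
Qed.
End Lists.

Section Alg.
Variables (E0 E1 : Type) (s r : E1 -> E0) (R : nzRingType) (B : pzRingType).
Variables (iota : {rmorphism R -> B}) (vv : E0 -> B) (ee es : E1 -> B).
Hypothesis Hrel : LPA_relations s r iota vv ee es.

Lemma Rvv v w : v <> w -> vv v * vv w = 0. Proof. by case: Hrel => H _; apply: H. Qed.
Lemma Rid v : vv v * vv v = vv v. Proof. by case: Hrel => _ [H _]; apply: H. Qed.
Lemma Ree1 f : vv (s f) * ee f = ee f. Proof. by case: Hrel => _ [_ [H _]]; case: (H f). Qed.
Lemma Ree2 f : ee f * vv (r f) = ee f. Proof. by case: Hrel => _ [_ [H _]]; case: (H f). Qed.
Lemma Res1 f : vv (r f) * es f = es f. Proof. by case: Hrel => _ [_ [_ [H _]]]; case: (H f). Qed.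
Lemma Res2 f : es f * vv (s f) = es f. Proof. by case: Hrel => _ [_ [_ [H _]]]; case: (H f). Qed.
Lemma Rorth f g : f <> g -> es f * ee g = 0. Proof. by case: Hrel => _ [_ [_ [_ [H _]]]]; apply: H. Qed.
Lemma Rstar f : es f * ee f = vv (r f). Proof. by case: Hrel => _ [_ [_ [_ [_ [H _]]]]]; apply: H. Qed.
Lemma Riota a : (forall v, iota a * vv v = vv v * iota a) /\
    (forall f, iota a * ee f = ee f * iota a) /\ (forall f, iota a * es f = es f * iota a).
Proof. by case: Hrel => _ [_ [_ [_ [_ [_ [_ H]]]]]]. Qed.

Definition Pe a := \prod_(f <- a) ee f.
Definition Ps (a : seq E1) := \prod_(f <- rev a) es f.

Lemma Pe_cons f a : Pe (f :: a) = ee f * Pe a. Proof. by rewrite /Pe big_cons. Qed.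
Lemma Ps_cons f a : Ps (f :: a) = Ps a * es f. Proof. by rewrite /Ps rev_cons big_rcons. Qed.
Lemma Pe_cat a t : Pe (a ++ t) = Pe a * Pe t. Proof. by rewrite /Pe big_cat. Qed.
Lemma Ps_cat a t : Ps (a ++ t) = Ps t * Ps a. Proof. by rewrite /Ps rev_cat big_cat. Qed.
Lemma Pe_nil : Pe [::] = 1. Proof. by rewrite /Pe big_nil. Qed.
Lemma Ps_nil : Ps [::] = 1. Proof. by rewrite /Ps big_nil. Qed.

Lemma absE w a : is_path s r w a -> vv w * Pe a * vv (endp r w a) = vv w * Pe a.
Proof.
elim: a w => [|f a IH] w /=; first by rewrite Pe_nil mulr1 Rid.
move=> [Hs Hp]; rewrite Pe_cons -Hs !mulrA Ree1 -(Ree2 f).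
have := IH _ Hp; rewrite -!mulrA => ->; done.
Qed.

Lemma absE' w b : is_path s r w b -> vv (endp r w b) * Ps b * vv w = Ps b * vv w.
Proof.
elim: b w => [|f b IH] w /=; first by rewrite Ps_nil mulr1 mul1r Rid.
move=> [Hs Hp]; rewrite Ps_cons -Hs -!mulrA Res2 -(Res1 f) !mulrA.
by rewrite IH.
Qed.

Lemma G1 w b t : is_path s r w b -> Ps b * vv w * Pe (b ++ t) = vv (endp r w b) * Pe t.
Proof.
elim: b w => [|f b IH] w /=; first by rewrite Ps_nil mul1r.
move=> [Hs Hp]; rewrite Ps_cons Pe_cons -Hs.
rewrite -!mulrA [es f * _]mulrA Res2 [es f * _]mulrA Rstar !mulrA -IH //.
Qed.

Lemma G2 w a t : is_path s r w a -> Ps (a ++ t) * vv w * Pe a = Ps t * vv (endp r w a).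
Proof.
elim: a w => [|f a IH] w /=; first by rewrite Pe_nil mulr1.
move=> [Hs Hp]; rewrite Ps_cons Pe_cons -Hs.
rewrite -!mulrA [es f * _]mulrA Res2 [es f * _]mulrA Rstar !mulrA -IH //.
Qed.

Lemma G3 w p f g b1 a1 : f <> g -> is_path s r w (p ++ f :: b1) ->
  Ps (p ++ f :: b1) * vv w * Pe (p ++ g :: a1) = 0.
Proof.
move=> N; elim: p w => [|h p IH] w /=.
  move=> [Hs Hp]; rewrite Ps_cons Pe_cons -Hs.
  by rewrite -!mulrA [es f * _]mulrA Res2 [es f * _]mulrA Rorth // mul0r !mulr0.
move=> [Hs Hp]; rewrite Ps_cons Pe_cons -Hs.
rewrite -!mulrA [es h * _]mulrA Res2 [es h * _]mulrA Rstar !mulrA IH //.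
Qed.


Definition S := in_deg0 s r iota vv ee es.
Definition mon c v a w b := iota c * path_el vv ee v a * path_star_el vv es w b.
Definition okm v a w b := is_path s r v a /\ is_path s r w b /\ size a = size b.

Definition o0 (T : Type) (i : 'I_0) : T.
Proof. by case: i. Defined.

Lemma S0 : S 0.
Proof.
exists 0%N, (fun=> 0), (@o0 E0), (@o0 E0), (fun=> [::]), (fun=> [::]).
by split; [case | rewrite big_ord0].
Qed.

Lemma S_mon c v a w b : okm v a w b -> S (mon c v a w b).
Proof.
move=> [H1 [H2 H3]].
exists 1%N, (fun=> c), (fun=> v), (fun=> w), (fun=> a), (fun=> b).
by split; [ | rewrite big_ord1].
Qed.

Definition sel (T : Type) n m (f : 'I_n -> T) (g : 'I_m -> T) (i : 'I_(n + m)) : T :=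
  match split i with inl j => f j | inr k => g k end.
Lemma sel_l T n m f g j : @sel T n m f g (lshift m j) = f j.
Proof. by rewrite /sel (unsplitK (inl _ j)). Qed.
Lemma sel_r T n m f g j : @sel T n m f g (rshift n j) = g j.
Proof. by rewrite /sel (unsplitK (inr _ j)). Qed.

Lemma S_add x y : S x -> S y -> S (x + y).
Proof.
move=> [n [c [v [w [a [b [H ->]]]]]]] [m [c' [v' [w' [a' [b' [H' ->]]]]]]].
exists (n + m)%N, (sel c c'), (sel v v'), (sel w w'), (sel a a'), (sel b b').
split.
  by move=> i; rewrite /sel; case: (split i) => j; [exact: H | exact: H'].
rewrite big_split_ord; congr (_ + _); apply: eq_bigr => i _;
  by rewrite ?sel_l ?sel_r.
Qed.

Lemma S_opp x : S x -> S (- x).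
Proof.
move=> [n [c [v [w [a [b [H ->]]]]]]].
exists n, (fun i => - c i), v, w, a, b; split => //.
rewrite -sumrN; apply: eq_bigr => i _; by rewrite rmorphN !mulNr.
Qed.

Lemma S_sum n (F : 'I_n -> B) : (forall i, S (F i)) -> S (\sum_(i < n) F i).
Proof. move=> H; apply: big_ind => //; [exact: S0 | exact: S_add]. Qed.



Lemma comm_vv c v : GRing.comm (iota c) (vv v).
Proof. by case: (Riota c) => H _; apply: H. Qed.
Lemma comm_Pe c a : GRing.comm (iota c) (Pe a).
Proof. apply: commr_prod => f _; by case: (Riota c) => _ [H _]; apply: H. Qed.
Lemma comm_Ps c a : GRing.comm (iota c) (Ps a).
Proof. apply: commr_prod => f _; by case: (Riota c) => _ [_ H]; apply: H. Qed.

Lemma mon_mul c v a w b c' v' a' w' b' :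
  okm v a w b -> okm v' a' w' b' -> S (mon c v a w b * mon c' v' a' w' b').
Proof.
move=> [Ha [Hb Hab]] [Ha' [Hb' Hab']].
have -> : mon c v a w b * mon c' v' a' w' b' =
    iota (c * c') * (vv v * Pe a * (Ps b * vv w * (vv v' * Pe a')) * (Ps b' * vv w')).
  rewrite /mon /path_el /path_star_el rmorphM -/(Pe a) -/(Pe a') -/(Ps b) -/(Ps b').
  have C : GRing.comm (iota c') (vv v * Pe a * (Ps b * vv w)).
    by apply: commrM; apply: commrM; rewrite ?comm_vv ?comm_Pe ?comm_Ps //;
      [exact: comm_vv | exact: comm_Pe | exact: comm_Ps | exact: comm_vv].
  rewrite -!mulrA; congr (_ * _); rewrite !mulrA.
  move: C; rewrite /GRing.comm !mulrA => C; by rewrite -C.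
case: (pselect (w = v')) => [Ew|Nw]; last first.
  have -> : Ps b * vv w * (vv v' * Pe a') = 0.
    by rewrite mulrA -[Ps b * vv w * vv v']mulrA Rvv // mulr0 mul0r.
  rewrite mulr0 mul0r mulr0; exact: S0.
subst v'.
have -> : Ps b * vv w * (vv w * Pe a') = Ps b * vv w * Pe a'.
  by rewrite [Ps b * vv w * (vv w * Pe a')]mulrA -[Ps b * vv w * vv w]mulrA Rid.
case: (trich b a') => [[t Et]|[[t Et]|[p [f [g [b1 [a1 [N [Eb Ea]]]]]]]]].
- subst a'; rewrite (G1 _ Hb).
  move: Ha' => /is_path_cat [Hb2 Ht].
  case: (pselect (endp r w b = endp r v a)) => [Ez|Nz].
    have -> : vv v * Pe a * (vv (endp r w b) * Pe t) = vv v * Pe (a ++ t).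
      by rewrite Ez mulrA (absE Ha) Pe_cat mulrA.
    rewrite mulrA; apply: S_mon; split; last split => //.
      by apply/is_path_cat; split => //; rewrite -Ez.
    by rewrite size_cat Hab -Hab' size_cat.
  have -> : vv v * Pe a * (vv (endp r w b) * Pe t) = 0.
    rewrite mulrA -(absE Ha) -[vv v * Pe a * vv (endp r v a) * vv (endp r w b)]mulrA Rvv;
      last by move=> E; apply: Nz.
    by rewrite mulr0 mul0r.
  by rewrite mul0r mulr0; exact: S0.
- subst b; rewrite (G2 _ Ha').
  move: Hb => /is_path_cat [Ha2 Ht].
  case: (pselect (endp r w a' = endp r w' b')) => [Ez|Nz].
    have -> : vv v * Pe a * (Ps t * vv (endp r w a')) * (Ps b' * vv w') =
        vv v * Pe a * (Ps (b' ++ t) * vv w').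
      by rewrite Ps_cat -!mulrA; congr (_ * (_ * (_ * _))); rewrite Ez mulrA (absE' Hb').
    rewrite mulrA; apply: S_mon; split => //; split.
      by apply/is_path_cat; split => //; rewrite -Ez.
    by rewrite size_cat -Hab' -size_cat.
  have -> : vv v * Pe a * (Ps t * vv (endp r w a')) * (Ps b' * vv w') = 0.
    rewrite -(absE' Hb') -!mulrA [vv (endp r w a') * (vv _ * _)]mulrA Rvv //.
    by rewrite mul0r !mulr0.
  by rewrite mulr0; exact: S0.
- subst b a'; rewrite (G3 a1 N Hb) mulr0 mul0r mulr0; exact: S0.
Qed.

Lemma S_mul x y : S x -> S y -> S (x * y).
Proof.
move=> [n [c [v [w [a [b [H ->]]]]]]] [m [c' [v' [w' [a' [b' [H' ->]]]]]]].
rewrite mulr_suml; apply: S_sum => i; rewrite mulr_sumr; apply: S_sum => j.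
by apply: mon_mul; [exact: H | exact: H'].
Qed.

End Alg.


Lemma not_noeth (B : pzRingType) (S : B -> Prop) (p : nat -> B) :
  S 0 -> (forall x y, S x -> S y -> S (x - y)) -> (forall x y, S x -> S y -> S (x * y)) ->
  (forall k, S (p k)) -> (forall k, p k * p k = p k) ->
  (forall j k, j <> k -> p j * p k = 0) -> (forall k, p k <> 0) ->
  ~ left_noetherian S /\ ~ right_noetherian S.
Proof.
move=> S0 Ssub Smul Sp pp po pnz.
pose P n := \sum_(k < n) p k.
have PpL : forall n m, (n <= m)%N -> P n * p m = 0.
  move=> n m nm; rewrite /P mulr_suml big1 // => i _; apply: po => E.
  by have := ltn_ord i; rewrite E ltnNge nm.
have PpR : forall n m, (n <= m)%N -> p m * P n = 0.
  move=> n m nm; rewrite /P mulr_sumr big1 // => i _; apply: po => E.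
  by have := ltn_ord i; rewrite -E ltnNge nm.
have PS : forall n, P n.+1 = P n + p n by move=> n; rewrite /P big_ord_recr.
have PP : forall n, P n * P n = P n.
  elim=> [|n IH]; first by rewrite /P big_ord0 mulr0.
  by rewrite PS mulrDl !mulrDr IH PpL // PpR // pp addr0 add0r.
have PP1 : forall n, P n * P n.+1 = P n by move=> n; rewrite PS mulrDr PP PpL // addr0.
have PP2 : forall n, P n.+1 * P n = P n by move=> n; rewrite PS mulrDl PP PpR // addr0.
split.
- move=> H.
  pose I := fun n x => S x /\ x = x * P n.
  have HI : forall n, left_ideal_of S (I n).
    move=> n; split.
    - by move=> x [].
    - by split; rewrite ?mul0r.
    - move=> x y [Sx Ex] [Sy Ey]; split; first exact: Ssub.
      by rewrite mulrBl -Ex -Ey.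
    - move=> a x Sa [Sx Ex]; split; first exact: Smul.
      by rewrite -mulrA -Ex.
  have Hinc : forall n x, I n x -> I n.+1 x.
    move=> n x [Sx Ex]; split => //; by rewrite Ex -mulrA PP1.
  have [N HN] := H I HI Hinc.
  have : S (p N) /\ p N = p N * P N.+1 by split => //; rewrite PS mulrDr PpR // pp add0r.
  move/(HN N.+1 (leqnSn N)) => [_ E]; apply: (pnz N); by rewrite E PpR.
- move=> H.
  pose I := fun n x => S x /\ x = P n * x.
  have HI : forall n, right_ideal_of S (I n).
    move=> n; split.
    - by move=> x [].
    - by split; rewrite ?mulr0.
    - move=> x y [Sx Ex] [Sy Ey]; split; first exact: Ssub.
      by rewrite mulrBr -Ex -Ey.
    - move=> a x Sa [Sx Ex]; split; first exact: Smul.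
      by rewrite mulrA -Ex.
  have Hinc : forall n x, I n x -> I n.+1 x.
    move=> n x [Sx Ex]; split => //; by rewrite Ex mulrA PP2.
  have [N HN] := H I HI Hinc.
  have : S (p N) /\ p N = P N.+1 * p N by split => //; rewrite PS mulrDl PpL // pp add0r.
  move/(HN N.+1 (leqnSn N)) => [_ E]; apply: (pnz N); by rewrite E PpL.
Qed.

Section Fam.
Variables (E0 E1 : Type) (s r : E1 -> E0) (R : nzRingType) (B : pzRingType).
Variables (iota : {rmorphism R -> B}) (vv : E0 -> B) (ee es : E1 -> B).
Hypothesis Huniv : LPA_universal s r iota vv ee es.

Let Hrel : LPA_relations s r iota vv ee es := proj1 Huniv.

Definition mono v a := path_el vv ee v a * path_star_el vv es v a.

Definition mism (a a' : seq E1) := exists p f g b1 a1, f <> g /\ a = p ++ f :: b1 /\ a' = p ++ g :: a1.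

Lemma mono_S v a : is_path s r v a -> S s r iota vv ee es (mono v a).
Proof.
move=> Ha; have := S_mon iota vv ee es 1 (conj Ha (conj Ha (erefl (size a)))).
by rewrite /mon rmorph1 mul1r.
Qed.

Lemma mono_split v a v' a' : mono v a * mono v' a' =
  (vv v * Pe ee a) * (Ps es a * vv v * (vv v' * Pe ee a')) * (Ps es a' * vv v').
Proof. by rewrite /mono /path_el /path_star_el !mulrA. Qed.

Lemma mono_idem v a : is_path s r v a -> mono v a * mono v a = mono v a.
Proof.
move=> Ha; rewrite mono_split.
have -> : Ps es a * vv v * (vv v * Pe ee a) = vv (endp r v a).
  rewrite mulrA -[Ps es a * vv v * vv v]mulrA (Rid Hrel).
  by have := G1 Hrel [::] Ha; rewrite cats0 (Pe_nil ee) mulr1.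
by rewrite (absE Hrel Ha) /mono /path_el /path_star_el.
Qed.

Lemma mono_orth v a v' a' : is_path s r v a -> v <> v' \/ mism a a' ->
  mono v a * mono v' a' = 0.
Proof.
move=> Ha H; rewrite mono_split.
case: (pselect (v = v')) => [E|N].
  subst v'; case: H => [//|[p [f [g [b1 [a1 [N [Ea Ea']]]]]]]].
  rewrite [Ps es a * vv v * (vv v * _)]mulrA -[Ps es a * vv v * vv v]mulrA (Rid Hrel).
  subst a a'; rewrite (G3 Hrel a1 N Ha) mulr0 mul0r; done.
rewrite [Ps es a * vv v * (vv v' * _)]mulrA -[Ps es a * vv v * vv v']mulrA (Rvv Hrel N) mulr0 mul0r mulr0 mul0r.
done.
Qed.

Lemma mono_nz v a : is_path s r v a -> mono v a <> 0.
Proof.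
move=> Ha E.
have [phi [H1 H2 H3 H4 H5]] := (proj2 Huniv) _ (iotaO E0 E1 (R:=R)) (vvO s r R) (eeO s r R) (esO s r R)
   (model_rel s r R).
apply: (model_nz (R:=R) Ha).
have := congr1 phi E; rewrite rmorph0 /mono /path_el /path_star_el !rmorphM !rmorph_prod H2.
rewrite (eq_bigr _ (fun f _ => H3 f)) (eq_bigr _ (fun f _ => H4 f)).
by [].
Qed.

Lemma fam_contra (vf : nat -> E0) (af : nat -> seq E1) :
  (forall k, is_path s r (vf k) (af k)) ->
  (forall j k, j <> k -> vf j <> vf k \/ mism (af j) (af k)) ->
  ~ (left_noetherian (in_deg0 s r iota vv ee es) \/ right_noetherian (in_deg0 s r iota vv ee es)).
Proof.
move=> Hp Hs.
have [L Rt] := @not_noeth B (in_deg0 s r iota vv ee es) (fun k => mono (vf k) (af k))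
  (S0 s r iota vv ee es)
  (fun x y Sx Sy => S_add Sx (S_opp Sy))
  (fun x y Sx Sy => S_mul Hrel Sx Sy)
  (fun k => mono_S (Hp k)) (fun k => mono_idem (Hp k))
  (fun j k jk => mono_orth (Hp j) (Hs j k jk)) (fun k => mono_nz (Hp k)).
by case.
Qed.

End Fam.

Section Inj.
Variable T : Type.
Variable h : seq T -> T.
Fixpoint Ls (n : nat) : seq T := match n with 0 => [::] | n'.+1 => h (Ls n') :: Ls n' end.
Lemma Ls_in k n : (k < n)%N -> List.In (h (Ls k)) (Ls n).
Proof.
elim: n => [//|n IH]; rewrite ltnS leq_eqVlt => /orP [/eqP ->|kn] /=; first by left.
by right; apply: IH.
Qed.
End Inj.

Lemma inj_seq (T : Type) : ~ Defs.fin_type T -> exists v : nat -> T, forall i j, i <> j -> v i <> v j.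
Proof.
move=> Hnf.
have H : forall l : seq T, exists x, ~ List.In x l.
  move=> l; case: (pselect (exists x, ~ List.In x l)) => // N; exfalso; apply: Hnf.
  exists l => x; case: (pselect (List.In x l)) => // Nx; case: N; by exists x.
pose h l := proj1_sig (cid (H l)).
have hP : forall l, ~ List.In (h l) l by move=> l; rewrite /h; case: (cid (H l)).
exists (fun n => h (Ls h n)) => i j; case: (ltngtP i j) => [ij|ji|->] // _.
  by move=> E; apply: (hP (Ls h j)); rewrite -E; apply: Ls_in.
by move=> E; apply: (hP (Ls h i)); rewrite E; apply: Ls_in.
Qed.

Section Cyc.
Variables (E0 E1 : Type) (s r : E1 -> E0).
Local Open Scope nat_scope.

Lemma cyc_family n c : is_cycle s r n c -> cycle_has_exit s n c ->
  exists (vf : nat -> E0) (af : nat -> seq E1), (forall k, is_path s r (vf k) (af k)) /\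
    (forall j k, j <> k -> vf j <> vf k \/ mism (af j) (af k)).
Proof.
move=> [Hc1 [Hc2 _]] [f [i [Hi [Hs Hne]]]].
pose L := n.+1.
pose d j := c ((i + j) %% L).
have Hd : forall j, s (d j.+1) = r (d j).
  move=> j; rewrite /d addnS -addn1 -modnDml.
  have : ((i + j) %% L < L)%N by rewrite ltn_mod.
  rewrite /L ltnS leq_eqVlt => /orP [/eqP ->|lt].
    by rewrite addn1 modnn.
  by rewrite addn1 modn_small // Hc1.
have Hpath : forall m j, is_path s r (s (d j)) (map d (iota j m)) /\
    endp r (s (d j)) (map d (iota j m)) = s (d (j + m)).
  elim=> [|m IH] j /=; first by rewrite addn0.
  rewrite -Hd; have [P1 P2] := IH j.+1; split => //; by rewrite P2 addSnnS.
have HdL : forall k, d (k * L) = c i.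
  by move=> k; rewrite /d addnC modnMDl modn_small.
have Hd0 : d 0 = c i by have := HdL 0; rewrite mul0n.
pose af k := map d (iota 0 (k * L)) ++ [:: f].
exists (fun=> s (c i)), af; split.
  move=> k; apply/is_path_cat; have [P1 P2] := Hpath (k * L) 0.
  rewrite -Hd0; split => //; rewrite P2 add0n HdL /=; done.
have Hsplit : forall j k, (j < k)%N -> exists m,
    af k = map d (iota 0 (j * L)) ++ c i :: (map d (iota (j * L).+1 m) ++ [:: f]).
  move=> j k jk; exists ((k - j) * L).-1.
  have Hpos : (0 < (k - j) * L)%N by rewrite muln_gt0 subn_gt0 jk.
  rewrite /af -{1}(subnKC (ltnW jk)) mulnDl -(prednK Hpos) iotaD map_cat /= add0n -catA (HdL j).
  done.
move=> j k jk; right.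
case: (ltngtP j k) => [lt|gt|eq]; last by [].
  have [m ->] := Hsplit j k lt.
  by exists (map d (iota 0 (j * L))), f, (c i), [::], (map d (iota (j * L).+1 m) ++ [:: f]).
have [m ->] := Hsplit k j gt.
exists (map d (iota 0 (k * L))), (c i), f, (map d (iota (k * L).+1 m) ++ [:: f]), [::].
by split => //; move=> E; apply: Hne.
Qed.
End Cyc.

Theorem lemma4p21 (R : nzRingType) (E0 E1 : Type) (s r : E1 -> E0)
  (B : pzRingType) (iota : {rmorphism R -> B}) (vv : E0 -> B) (ee es : E1 -> B) :
  LPA_universal s r iota vv ee es ->
  left_noetherian (in_deg0 s r iota vv ee es) \/
  right_noetherian (in_deg0 s r iota vv ee es) ->
  finite_graph E0 E1 /\ condNE s r.
Proof.
move=> Hu Hn.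
have FC := fam_contra Hu.
split; first split.
- case: (pselect (Defs.fin_type E0)) => // N; exfalso.
  have [v Hv] := inj_seq N.
  apply: (FC v (fun=> [::])) => //; move=> j k jk; left; exact: Hv.
- case: (pselect (Defs.fin_type E1)) => // N; exfalso.
  have [g Hg] := inj_seq N.
  apply: (FC (fun k => s (g k)) (fun k => [:: g k])) => //.
  move=> j k jk; right; exists [::], (g j), (g k), [::], [::]; split => //; exact: Hg.
- move=> n c Hc Hex.
  have [vf [af [Hp Hs]]] := cyc_family Hc Hex.
  exact: FC vf af Hp Hs Hn.
Qed.
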